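(* Let $\eta$ be a Poisson point process on a $\sigma$-finite measure space $(\mathbb{U},\mathcal{U},\mu)$ with intensity $\mu$. For every $p\ge2$ there is $c_p$, depending only on $p$, such that for every $\mathfrak F\in L^p_\eta$, $$\mathbb{E}\int_{\mathbb{U}}\big(D_u|\mathfrak F|^{p/2}\big)^2\,\mu(du)\le c_p\Big(\mathbb{E}\int_{\mathbb{U}}|D_u\mathfrak F|^p\,\mu(du)+\mathbb{E}\Big(\int_{\mathbb{U}}(D_u\mathfrak F)^2\,\mu(du)\Big)^{p/2}\Big)+\tfrac12\mathbb{E}|\mathfrak F|^p.$$
   Context: $L^p_\eta$ denotes the random variables of the form $f(\eta)$, with $f$ a measurable function on the space of $\{0,1,\dots,\infty\}$-valued $\sigma$-finite measures on $\mathbb{U}$, having finite $p$-th moment. The difference operator is $(D_u\mathfrak F)(\eta)=\mathfrak F(\eta+\delta_u)-\mathfrak F(\eta)$. *)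

(* Defs.v *)
From HB Require Import structures.
From mathcomp Require Import all_boot all_order all_algebra.
From mathcomp Require Import all_classical all_reals all_analysis measurable_realfun.
Set Implicit Arguments. Unset Strict Implicit. Unset Printing Implicit Defensive.
Import Order.TTheory GRing.Theory Num.Theory.
Local Open Scope classical_set_scope.
Local Open Scope ring_scope.

Section PoissonDefs.
Context {R : realType} {d : measure_display} (T : measurableType d).

(** A configuration: a set function on T (the point-process realisations
    live in the subclass [is_Nmeasure]). *)
Definition config := set T -> \bar R.

Definition eval_gen : set (set config) :=
  [set S | exists (A : set T) (B : set (\bar R)),
     [/\ measurable A, measurable B & S = (fun nu : config => nu A) @^-1` B]].

Definition config_measurable_fun (f : config -> R) : Prop :=
  forall B : set R, measurable B -> <<s eval_gen >> (f @^-1` B).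

Definition is_Nmeasure (nu : config) : Prop :=
  [/\ nu set0 = 0%E,
      (forall A, measurable A -> nu A = +oo%E \/ exists n : nat, nu A = n%:R%:E),
      semi_sigma_additive nu &
      exists F : (set T)^nat,
        [/\ (forall i, measurable (F i)), \bigcup_i F i = setT &
            forall i, (nu (F i) < +oo)%E]].

Definition add_dirac (nu : config) (u : T) : config :=
  fun A => (nu A + (\1_A u)%:E)%E.

Definition Dop (f : config -> R) (nu : config) (u : T) : R :=
  f (add_dirac nu u) - f nu.

Definition poisson_process (mu : {measure set T -> \bar R})
  {dO : measure_display} {Omega : measurableType dO}
  (P : probability Omega R) (eta : Omega -> config) : Prop :=
  [/\ (forall w, is_Nmeasure (eta w)),
      (forall A, measurable A -> measurable_fun setT (fun w => eta w A)),
      (forall A, measurable A ->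
         match mu A with
         | EFin r => forall n : nat,
             P [set w | eta w A = n%:R%:E] =
               ((r ^+ n / (n`!)%:R) * expR (- r))%:E
         | _ => P [set w | eta w A = +oo%E] = 1%E
         end) &
      (forall (n : nat) (A : 'I_n -> set T) (B : 'I_n -> set (\bar R)),
         (forall i, measurable (A i)) ->
         (forall i j, i != j -> A i `&` A j = set0) ->
         (forall i, measurable (B i)) ->
         P (\bigcap_i ((fun w => eta w (A i)) @^-1` B i)) =
           (\prod_(i < n) P ((fun w => eta w (A i)) @^-1` B i))%E)].

End PoissonDefs.

(* Main.v *)
Require Import Defs.
From HB Require Import structures.
From mathcomp Require Import all_boot all_order all_algebra.
From mathcomp Require Import all_classical all_reals all_analysis measurable_realfun.
Import Order.TTheory GRing.Theory Num.Theory.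
Local Open Scope classical_set_scope.
Local Open Scope ring_scope.
From mathcomp Require Import ring lra.
Section RealLemmas.
Variable R : realType.
Implicit Types (s m M p : R).

Lemma tangent_powR s m M : 1 <= s -> 0 <= m -> m <= M ->
  M `^ s - m `^ s <= s * M `^ (s - 1) * (M - m).
Proof.
move=> s1 m0 mM.
have M0 : 0 <= M by exact: le_trans mM.
have [->|s1'] := eqVneq s 1.
  by rewrite !powRr1 // subrr powRr0 !mul1r.
have s1lt : 1 < s by rewrite lt_neqAle eq_sym s1' s1.
have s0 : 0 < s by exact: lt_le_trans ltr01 s1.
have s10 : 0 < s - 1 by rewrite subr_gt0.
have H := @conjugate_powR R m (M `^ (s - 1)) s (s / (s - 1)) m0 (powR_ge0 _ _) s0
  (divr_gt0 s0 s10) _.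
have {H} H : m * M `^ (s - 1) <= m `^ s / s + M `^ s * (s - 1) / s.
  rewrite -powRrM (_ : (s - 1) * (s / (s - 1)) = s) in H; last first.
    by field; rewrite gt_eqF.
  rewrite (_ : M `^ s * (s - 1) / s = M `^ s / (s / (s - 1))); last first.
    by field; rewrite !gt_eqF.
  apply: H.
  by field; rewrite !gt_eqF.
have HM : M * M `^ (s - 1) = M `^ s by rewrite mulr_powRB1.
have H2 : s * (m * M `^ (s - 1)) <= m `^ s + (s - 1) * M `^ s.
  apply: (@le_trans _ _ (s * (m `^ s / s + M `^ s * (s - 1) / s))).
    by rewrite ler_pM2l.
  rewrite le_eqVlt; apply/orP; left; apply/eqP; by field; rewrite gt_eqF.

rewrite mulrBr -mulrA [M `^ (s-1) * M]mulrC HM.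
move: H2; set X := M `^ s; set Y := m `^ s; set Z := M `^ (s - 1) => H2.
lra.
Qed.

Lemma sqr_normr (x : R) : `|x| ^+ 2 = x ^+ 2.
Proof. exact: real_normK (num_real x). Qed.

Definition Kc p : R := (p / 2) ^+ 2 * 2 `^ (p - 2).

Lemma Kc_gt0 p : 2 <= p -> 0 < Kc p.
Proof.
move=> p2; rewrite /Kc mulr_gt0 ?powR_gt0 ?exprn_gt0 //.
by rewrite divr_gt0 // (lt_le_trans _ p2).
Qed.

Lemma diff_powR_bound (s x y h : R) : 1 <= s -> 0 <= x -> 0 <= y -> `|x - y| <= h ->
  `|x `^ s - y `^ s| <= s * (y + h) `^ (s - 1) * h.
Proof.
move=> s1 x0 y0 hxy.
have h0 : 0 <= h by exact: le_trans hxy.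
have s0 : 0 <= s by exact: le_trans ler01 s1.
have s10 : 0 <= s - 1 by rewrite subr_ge0.
have [yx|xy] := leP y x.
  have Hxy : x - y <= h by move: hxy; rewrite ger0_norm // subr_ge0.
  have Hp : y `^ s <= x `^ s by apply: ge0_ler_powR; rewrite ?nnegrE.
  rewrite (@ger0_norm _ (x `^ s - y `^ s)); last by rewrite subr_ge0.

  apply: (le_trans (@tangent_powR s y x s1 y0 yx)).
  apply: ler_pM => //.
  - by rewrite mulr_ge0 // powR_ge0.
  - by rewrite subr_ge0.
  rewrite ler_pM2l ?(lt_le_trans ltr01) //.
  by apply: (ge0_ler_powR s10); rewrite ?nnegrE ?addr_ge0 //; lra.
have Hxy : y - x <= h by move: hxy; rewrite ltr0_norm ?subr_lt0 // opprB.
have Hp : x `^ s <= y `^ s by apply: (ge0_ler_powR s0); rewrite ?nnegrE // ltW.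
rewrite (@ler0_norm _ (x `^ s - y `^ s)); last by rewrite subr_le0.
rewrite opprB.
apply: (le_trans (@tangent_powR s x y s1 x0 (ltW xy))).
apply: ler_pM => //.
- by rewrite mulr_ge0 // powR_ge0.
- by rewrite subr_ge0 ltW.
rewrite ler_pM2l ?(lt_le_trans ltr01) //.
by apply: (ge0_ler_powR s10); rewrite ?nnegrE ?addr_ge0 //; lra.
Qed.

Lemma sum_powR_bound (q y h : R) : 0 <= q -> 0 <= y -> 0 <= h ->
  (y + h) `^ q <= 2 `^ q * (y `^ q + h `^ q).
Proof.
move=> q0 y0 h0.
have key : forall m, 0 <= m -> y <= m -> h <= m -> m `^ q <= y `^ q + h `^ q ->
    (y + h) `^ q <= 2 `^ q * (y `^ q + h `^ q).
  move=> m m0 ym hm H.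
  apply: (@le_trans _ _ ((2 * m) `^ q)).
    apply: (ge0_ler_powR q0); rewrite ?nnegrE ?addr_ge0 ?mulr_ge0 //.
    by rewrite mulr2n mulrDl mul1r lerD.
  by rewrite powRM // ler_pM2l ?powR_gt0.
have [yh|hy] := leP y h.
  by apply: (key h) => //; rewrite lerDr powR_ge0.
by apply: (key y) => //; [exact: ltW | rewrite lerDl powR_ge0].
Qed.

Lemma sq_diff_pow (p a b : R) : 2 <= p ->
  (`|b| `^ (p / 2) - `|a| `^ (p / 2)) ^+ 2 <=
  Kc p * (`|b - a| `^ p + `|a| `^ (p - 2) * (b - a) ^+ 2).
Proof.
move=> p2.
set s := p / 2.
have s1 : 1 <= s by rewrite /s ler_pdivlMr // mul1r.
have q0 : 0 <= p - 2 by rewrite subr_ge0.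
set y := `|a|; set h := `|b - a|.
have y0 : 0 <= y by exact: normr_ge0.
have h0 : 0 <= h by exact: normr_ge0.
have H1 := @diff_powR_bound s `|b| y h s1 (normr_ge0 _) y0 (ler_dist_dist _ _).
have H2 : (`|b| `^ s - y `^ s) ^+ 2 <= (s * (y + h) `^ (s - 1) * h) ^+ 2.
  rewrite -[(_ - _) ^+ 2]sqr_normr; apply: lerXn2r; rewrite ?nnegrE //.
  by rewrite !mulr_ge0 ?powR_ge0 ?invr_ge0 //; lra.
apply: (le_trans H2).
have E1 : ((y + h) `^ (s - 1)) ^+ 2 = (y + h) `^ (p - 2).
  rewrite -powR_mulrn ?powR_ge0 // -powRrM; congr (_ `^ _).
  by rewrite /s; field.
have E2 : h `^ (p - 2) * (b - a) ^+ 2 = h `^ p.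
  rewrite -sqr_normr -/h -powR_mulrn // -powRD; first by congr (_ `^ _); ring.
  apply/implyP => /eqP H; exfalso; lra.
rewrite !exprMn E1 -E2.
have H3 := @sum_powR_bound (p - 2) y h q0 y0 h0.
have ss0 : 0 <= s ^+ 2 by rewrite exprn_ge0 // (le_trans ler01 s1).
have -> : h ^+ 2 = (b - a) ^+ 2 by rewrite /h sqr_normr.
rewrite (_ : Kc p * _ = (p / 2) ^+ 2 * (b - a) ^+ 2 *
   (2 `^ (p - 2) * (y `^ (p - 2) + h `^ (p - 2)))); last by rewrite /Kc; ring.
rewrite (_ : _ * _ * _ * _ = (p / 2) ^+ 2 * (b - a) ^+ 2 * (y + h) `^ (p - 2));
  last by rewrite exprMn; ring.
apply: ler_wpM2l => //; apply: mulr_ge0; last exact: sqr_ge0.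
by apply: exprn_ge0; apply: divr_ge0; lra.
Qed.

Definition Cc p K : R := K * (2 * K) `^ ((p - 2) / 2).

Lemma Cc_gt0 p K : 0 < K -> 0 < Cc p K.
Proof. by move=> K0; rewrite /Cc mulr_gt0 // powR_gt0 // mulr_gt0. Qed.

Lemma young_case (p K al x : R) : 2 <= p -> 0 < K -> 0 <= al -> 0 <= x ->
  K * al `^ (p - 2) * x <= 2^-1 * al `^ p + Cc p K * x `^ (p / 2).
Proof.
move=> p2 K0 al0 x0.
set r := (p - 2) / 2.
have r0 : 0 <= r by rewrite /r divr_ge0 //; lra.
have Hp0 : 0 <= 2^-1 * al `^ p by rewrite mulr_ge0 ?powR_ge0 // invr_ge0.
have HC0 : 0 <= Cc p K * x `^ (p / 2) by rewrite mulr_ge0 ?powR_ge0 // ltW // Cc_gt0.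
have [H|H] := leP (al `^ 2) (2 * K * x).
  apply: (@le_trans _ _ (Cc p K * x `^ (p / 2))); last by rewrite lerDr.
  have E : al `^ (p - 2) = (al `^ 2) `^ r by rewrite -powRrM /r; congr (_ `^ _); field.
  have E2 : x `^ (p / 2) = x `^ r * x.
    rewrite -{3}(powRr1 x0) -powRD; first by congr (_ `^ _); rewrite /r; field.
    by apply/implyP => /eqP Hr; exfalso; move: Hr; rewrite /r; lra.
  rewrite E E2 /Cc.
  have h2K : 0 <= 2 * K by lra.
  have h2Kx : 0 <= 2 * K * x by exact: mulr_ge0.
  have H' : (al `^ 2) `^ r <= (2 * K) `^ r * x `^ r.
    rewrite -powRM //.
    by apply: (ge0_ler_powR r0); rewrite ?nnegrE ?powR_ge0 //; exact: ltW.
  rewrite -/r -!mulrA ler_pM2l // mulrA.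
  exact: ler_wpM2r.
apply: (@le_trans _ _ (2^-1 * al `^ p)); last by rewrite lerDl.
have E : al `^ p = al `^ (p - 2) * al `^ 2.
  rewrite -powRD; first by congr (_ `^ _); ring.
  by apply/implyP => /eqP Hr; exfalso; move: Hr; lra.
rewrite E.
have Hq : 0 <= al `^ (p - 2) by exact: powR_ge0.
move: H; set A := al `^ 2; set Q := al `^ (p - 2) => H.
rewrite [K * Q]mulrC -mulrA.
apply: (@le_trans _ _ (Q * (2^-1 * A))); last by rewrite mulrCA.
by rewrite ler_wpM2l //; lra.
Qed.
End RealLemmas.
Arguments Kc {R}.
Arguments Cc {R}.

Section Meas.
Context (R : realType) (d : measure_display) (T : measurableType d).

Lemma config_meas_comp dX (X : measurableType dX) (g : X -> @config R d T)
  (f : @config R d T -> R) :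
  config_measurable_fun f ->
  (forall A B, measurable A -> measurable B ->
     measurable ((fun x => g x A) @^-1` B)) ->
  measurable_fun setT (f \o g).
Proof.
move=> hf hg _ B mB; rewrite setTI comp_preimage.
apply: (hf B mB [set S | measurable (g @^-1` S)]); split.
- split => /=.
  + by rewrite preimage_set0.
  + by move=> S mS; rewrite setTD -preimage_setC; exact: measurableC.
  + by move=> F mF; rewrite preimage_bigcup; exact: bigcupT_measurable.
- by move=> S [A [B' [mA mB' ->]]]; exact: hg.
Qed.

Lemma sect_meas dX (X : measurableType dX) (h : X -> \bar R) :
  measurable_fun setT h -> forall B, measurable B -> measurable (h @^-1` B).
Proof. by move=> mh B mB; have := mh measurableT B mB; rewrite setTI. Qed.

End Meas.

Section SF.
Context (R : realType) d (T : measurableType d) dO (O : measurableType dO).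
Variables (mu : {measure set T -> \bar R}) (hmu : sigma_finite setT mu).
Definition muF : set T -> \bar R := mu.
HB.instance Definition _ := Measure.on muF.
HB.instance Definition _ := Measure_isSigmaFinite.Build _ _ _ muF hmu.
Lemma fubiniF_meas (f : O * T -> \bar R) : measurable_fun setT f ->
  (forall x, (0 <= f x)%E) ->
  measurable_fun setT (fun x => \int[mu]_y f (x, y))%E.
Proof.
move=> mf f0.
exact: (@measurable_fun_fubini_tonelli_F _ _ _ _ _
  (muF : {sigma_finite_measure set T -> \bar R}) f mf f0).
Qed.
End SF.

Section YoungE.
Context (R : realType).
Local Open Scope ereal_scope.
Lemma young_caseE (p K al : R) (X : \bar R) : (2 <= p)%R -> (0 < K)%R -> (0 <= al)%R ->
  0 <= X ->
  (K * al `^ (p - 2))%:E * X <= (2^-1 * al `^ p)%:E + (Cc p K)%:E * X `^ (p / 2).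
Proof.
move=> p2 K0 al0; case: X => [x| |] X0 //.
  rewrite poweR_EFin -!EFinM -EFinD lee_fin.
  by apply: young_case => //; rewrite -lee_fin.
rewrite poweRyr; last by apply/eqP => H; move: p2; rewrite -[p](@divfK _ 2) ?H //; lra.
by rewrite (@gt0_muley _ (Cc p K)%:E) ?lte_fin ?Cc_gt0 // addey // leey.
Qed.
End YoungE.
Theorem mainTheorem3 (R : realType) (p : R) : 2 <= p ->
  exists c : R,
  forall (d : measure_display) (T : measurableType d)
         (mu : {measure set T -> \bar R}),
  sigma_finite setT mu ->
  forall (dO : measure_display) (Omega : measurableType dO)
         (P : probability Omega R) (eta : Omega -> config T),
  poisson_process mu P eta ->
  forall f : config T -> R,
  config_measurable_fun f ->
  (\int[P]_w (`|f (eta w)| `^ p)%:E < +oo)%E ->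
  (\int[P]_w \int[mu]_u
      ((Dop (fun nu => `|f nu| `^ (p / 2)) (eta w) u) ^+ 2)%:E
   <= c%:E * (\int[P]_w \int[mu]_u (`|Dop f (eta w) u| `^ p)%:E
              + \int[P]_w ((\int[mu]_u ((Dop f (eta w) u) ^+ 2)%:E) `^ (p / 2)))
      + (2^-1)%:E * \int[P]_w (`|f (eta w)| `^ p)%:E)%E.
Proof.
move=> p2.
set K := Kc p; set C := Cc p K.
have K0 : 0 < K by exact: Kc_gt0.
have C0 : 0 < C by exact: Cc_gt0.
exists (K + C).
move=> d T mu hmu dO Omega P eta [_ hA _ _] f hf _.
have mA A B : measurable A -> measurable B -> measurable ((fun w => eta w A) @^-1` B).
  by move=> mA' mB; exact: sect_meas (hA A mA') B mB.
have ma : measurable_fun setT (fun w => f (eta w)).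
  exact: (@config_meas_comp R d T dO Omega eta f hf mA).
have mb : measurable_fun setT (fun z : Omega * T => f (add_dirac (eta z.1) z.2)).
  apply: (@config_meas_comp R d T _ _ (fun z : Omega * T => add_dirac (eta z.1) z.2) f hf).
  move=> A B mA' mB; apply: sect_meas => //.
  apply: emeasurable_funD.
    exact: (measurableT_comp (hA A mA') measurable_fst).
  apply/measurable_EFinP; apply: (measurableT_comp _ measurable_snd).
  exact: measurable_indic.
have ma2 : measurable_fun setT (fun z : Omega * T => f (eta z.1)).
  exact: (measurableT_comp ma measurable_fst).
pose a w := f (eta w).
pose bb w u := f (add_dirac (eta w) u).
pose gL (z : Omega * T) := ((`|bb z.1 z.2| `^ (p / 2) - `|a z.1| `^ (p / 2)) ^+ 2)%:E.
pose gA (z : Omega * T) := (`|bb z.1 z.2 - a z.1| `^ p)%:E.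
pose gX (z : Omega * T) := ((bb z.1 z.2 - a z.1) ^+ 2)%:E.
have mgL : measurable_fun setT gL.
  apply/measurable_EFinP; apply: measurable_funX; apply: measurable_funB.
    exact: (measurableT_comp (@measurable_powR R _) (measurableT_comp (@normr_measurable R setT) mb)).
  exact: (measurableT_comp (@measurable_powR R _) (measurableT_comp (@normr_measurable R setT) ma2)).
have mgA : measurable_fun setT gA.
  apply/measurable_EFinP.
  exact: (measurableT_comp (@measurable_powR R _) (measurableT_comp (@normr_measurable R setT) (measurable_funB mb ma2))).
have mgX : measurable_fun setT gX.
  by apply/measurable_EFinP; apply: measurable_funX; exact: measurable_funB.
have gL0 z : (0 <= gL z)%E by rewrite lee_fin sqr_ge0.
have gA0 z : (0 <= gA z)%E by rewrite lee_fin powR_ge0.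
have gX0 z : (0 <= gX z)%E by rewrite lee_fin sqr_ge0.
pose L w := (\int[mu]_u gL (w, u))%E.
pose A w := (\int[mu]_u gA (w, u))%E.
pose X w := (\int[mu]_u gX (w, u))%E.
pose B w := (X w `^ (p / 2))%E.
pose G w := (`|a w| `^ p)%:E.
change (\int[P]_w L w <= (K + C)%:E * (\int[P]_w A w + \int[P]_w B w)
   + (2^-1)%:E * \int[P]_w G w)%E.
have mL : measurable_fun setT L by exact: fubiniF_meas.
have mAA : measurable_fun setT A by exact: fubiniF_meas.
have mX : measurable_fun setT X by exact: fubiniF_meas.
have mB : measurable_fun setT B by exact: (measurableT_comp (measurable_poweR _) mX).
have mG : measurable_fun setT G.
  apply/measurable_EFinP.
  exact: (measurableT_comp (@measurable_powR R _) (measurableT_comp (@normr_measurable R setT) ma)).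
have A0 w : (0 <= A w)%E by apply: integral_ge0 => u _.
have X0 w : (0 <= X w)%E by apply: integral_ge0 => u _.
have B0 w : (0 <= B w)%E by exact: poweR_ge0.
have G0 w : (0 <= G w)%E by rewrite lee_fin powR_ge0.
have L0 w : (0 <= L w)%E by apply: integral_ge0 => u _.
have Hpt w : (L w <= (K + C)%:E * A w + (K + C)%:E * B w + (2^-1)%:E * G w)%E.
  have msL : measurable_fun setT (fun u => gL (w, u)) by exact: measurable_fun_pair2.
  have msA : measurable_fun setT (fun u => gA (w, u)) by exact: measurable_fun_pair2.
  have msX : measurable_fun setT (fun u => gX (w, u)) by exact: measurable_fun_pair2.
  have step1 : (L w <= K%:E * A w + (K * `|a w| `^ (p - 2))%:E * X w)%E.
    rewrite /L /A /X -ge0_integralZl_EFin //; last exact: ltW.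
    rewrite -ge0_integralZl_EFin //; last by rewrite mulr_ge0 ?powR_ge0 // ltW.
    rewrite -ge0_integralD //; last 4 first.
      - by move=> u _; rewrite mule_ge0 // lee_fin ltW.
      - exact: measurable_funeM.
      - by move=> u _; rewrite mule_ge0 // lee_fin mulr_ge0 ?powR_ge0 // ltW.
      - exact: measurable_funeM.
    apply: ge0_le_integral => //.
      apply: emeasurable_funD; exact: measurable_funeM.
    move=> u _; rewrite /gL /gA /gX /= -!EFinM -EFinD lee_fin.
    have := @sq_diff_pow R p (a w) (bb w u) p2.
    by rewrite -/K mulrDr mulrA.
  have step2 := @young_caseE R p K `|a w| (X w) p2 K0 (normr_ge0 _) (X0 w).
  apply: (le_trans step1).
  rewrite -addeA; apply: leeD.
    by apply: (lee_wpmul2r (A0 w)); rewrite lee_fin lerDl ltW.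
  apply: (le_trans step2).
  rewrite [X in (_ <= X)%E]addeC; apply: leeD.
    by rewrite /G -EFinM.
  by apply: (lee_wpmul2r (B0 w)); rewrite lee_fin lerDr ltW.
have mKA : measurable_fun setT (fun w => (K + C)%:E * A w)%E by exact: measurable_funeM.
have mKB : measurable_fun setT (fun w => (K + C)%:E * B w)%E by exact: measurable_funeM.
have mHG : measurable_fun setT (fun w => (2^-1)%:E * G w)%E by exact: measurable_funeM.
have KC0 : (0 <= (K + C)%:E)%E by rewrite lee_fin addr_ge0 // ltW.
have h0 : (0 <= (2^-1 : R)%:E)%E by rewrite lee_fin invr_ge0.
apply: (@le_trans _ _ (\int[P]_w ((K + C)%:E * A w + (K + C)%:E * B w + (2^-1)%:E * G w))%E).
  exact: (ge0_le_integral P measurableT (fun w _ => L0 w) mL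
    (emeasurable_funD (emeasurable_funD mKA mKB) mHG) (fun w _ => Hpt w)).
rewrite (ge0_integralD P measurableT (fun w _ => adde_ge0 (mule_ge0 KC0 (A0 w)) (mule_ge0 KC0 (B0 w)))
  (emeasurable_funD mKA mKB) (fun w _ => mule_ge0 h0 (G0 w)) mHG).
rewrite (ge0_integralD P measurableT (fun w _ => mule_ge0 KC0 (A0 w)) mKA
  (fun w _ => mule_ge0 KC0 (B0 w)) mKB).
rewrite (ge0_integralZl P measurableT mAA (fun w _ => A0 w) KC0).
rewrite (ge0_integralZl P measurableT mB (fun w _ => B0 w) KC0).
rewrite (ge0_integralZl P measurableT mG (fun w _ => G0 w) h0).
rewrite (@ge0_muleDr _ (K + C)%:E (\int[P]_w A w)%E (\int[P]_w B w)%E).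
- exact: lexx.
- by apply: integral_ge0 => w _; exact: A0.
- by apply: integral_ge0 => w _; exact: B0.
Qed.
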